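(* Let $n\geqslant 0$, $r\geqslant 1$ and $d_1,\dots,d_r>1$ be integers, let $X_n(\underline{d})=X_n(d_1,\dots,d_r)\subset\mathbb{C}P^{n+r}$ be a complete intersection with canonical bundle $K$, and set $c_1=n+r+1-\sum_{i=1}^r d_i$. Let $N$ be a positive integer with $c_1\equiv 0\pmod N$. Then for every integer $k$ with $0\leqslant k\leqslant N$: (1) If $c_1>0$, then $\chi(X_n(\underline{d}),K^{k/N})=1$ if $k=0$, $=0$ if $0<k<N$, and $=(-1)^n$ if $k=N$. (2) If $c_1=0$, then $\chi(X_n(\underline{d}),K^{k/N})=1+(-1)^n$. (3) If $c_1<0$, then $(-1)^n\chi(X_n(\underline{d}),K^{k/N})\geqslant \binom{n+1-\frac{N-k}{N}c_1}{n+1}+(-1)^n\binom{n+1-\frac{k}{N}c_1}{n+1}$ if $0\leqslant \frac{k}{N}\leqslant\frac12$; $\chi(X_n(\underline{d}),K^{k/N})=0$ if $\frac{k}{N}=\frac12$ and $n$ is odd; $\chi(X_n(\underline{d}),K^{k/N})\geqslant \binom{n+1-\frac{k}{N}c_1}{n+1}+(-1)^n\binom{n+1-\frac{N-k}{N}c_1}{n+1}$ if $\frac12\leqslant \frac{k}{N}\leqslant 1$.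
   Context: A complete intersection $X_n(d_1,\dots,d_r)\subset\mathbb{C}P^{n+r}$ is a compact complex $n$-dimensional manifold given as the transversal intersection of $r$ nonsingular hypersurfaces of degrees $d_1,\dots,d_r$. Its first Chern class is $c_1 x$ with $c_1=n+r+1-\sum_i d_i$, where $x$ is the pullback of the hyperplane class, generating $H^2\cong\mathbb{Z}$. For a compact complex $n$-manifold $M$ with canonical bundle $K$ and a rational number $s$, $\chi(M,K^{s})$ denotes the genus with characteristic power series $Q(x)=e^{-sx}\frac{x}{1-e^{-x}}$, i.e. $\chi(M,K^s)=\big(e^{-s\,c_1(M)}\,{\rm td}(TM)\big)[M]$ (for $s=0$ this is the Todd genus; for $s=1/2$ the $\hat A$-genus). Generalized binomial coefficients: $\binom{a}{m}=\frac{a(a-1)\cdots(a-m+1)}{m!}$. *)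

(* Defs.v *)
From HB Require Import structures.
From mathcomp Require Import all_boot all_order all_algebra.
Set Implicit Arguments. Unset Strict Implicit. Unset Printing Implicit Defensive.
Import Order.TTheory GRing.Theory Num.Theory.
Local Open Scope ring_scope.

(* Formal power series in x with rational coefficients, handled as
   polynomials truncated to the first m coefficients (i.e. modulo x^m). *)
Definition trunc (m : nat) (p : {poly rat}) : {poly rat} := \poly_(i < m) p`_i.

Definition expS (m : nat) (a : rat) : {poly rat} :=
  \poly_(i < m) (a ^+ i / (i`!)%:R).

(* multiplicative inverse mod x^m of a series with constant term 1 *)
Definition invS (m : nat) (p : {poly rat}) : {poly rat} :=
  trunc m (\sum_(j < m) (1 - p) ^+ j).

(* x / (1 - e^{-x}) mod x^m, as inverse of (1 - e^{-x})/x = sum (-1)^i x^i/(i+1)! *)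
Definition toddS (m : nat) : {poly rat} :=
  invS m (\poly_(i < m) ((-1) ^+ i / (i.+1`!)%:R)).

Definition QS (s : rat) (m : nat) : {poly rat} :=
  trunc m (expS m (- s) * toddS m).

Definition scaleS (c : rat) (p : {poly rat}) : {poly rat} :=
  \poly_(i < size p) (p`_i * c ^+ i).

Definition c1_CI (n : nat) (d : seq nat) : int :=
  (n + size d + 1)%:Z - (\sum_(di <- d) di)%:Z.

(* chi(X_n(d), K^s) = ( e^{-s c_1(X)} td(TX) )[X].
   With x the hyperplane class, TX (+) O(d_1) (+) ... (+) O(d_r) = (n+r+1) O(1)
   stably, so the genus class with characteristic series Q is
   Q(x)^{n+r+1} / prod_i Q(d_i x), and evaluating a degree-n class a x^n on
   the fundamental class gives a * deg X = a * prod_i d_i. *)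
Definition chiK (n : nat) (d : seq nat) (s : rat) : rat :=
  let m := n.+1 in
  (\prod_(di <- d) (di%:R : rat)) *
  (trunc m (QS s m ^+ (n + size d + 1)
            * invS m (trunc m (\prod_(di <- d) scaleS di%:R (QS s m)))))`_n.

Definition gbinom (a : rat) (m : nat) : rat :=
  (\prod_(i < m) (a - i%:R)) / (m`!)%:R.

(* Submission.v *)
Require Import Defs.
From HB Require Import structures.
From mathcomp Require Import all_boot all_order all_algebra.
From mathcomp Require Import ring lra zify.
Import Order.TTheory GRing.Theory Num.Theory.
Local Open Scope ring_scope.
Set Implicit Arguments. Unset Strict Implicit. Unset Printing Implicit Defensive.

Section Trunc.
Variable m : nat.
Notation tr := (take_poly m).
Implicit Types p q : {poly rat}.

Lemma trE p : trunc m p = tr p. Proof. by []. Qed.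

Lemma tr_tr p : tr (tr p) = tr p.
Proof. by rewrite take_poly_id // size_take_poly. Qed.

Lemma trMl p q : tr (tr p * q) = tr (p * q).
Proof.
rewrite -{2}(poly_take_drop m p) mulrDl take_polyD -mulrA (mulrC 'X^m) mulrA.
by rewrite take_polyMXn_0 addr0.
Qed.

Lemma trMr p q : tr (p * tr q) = tr (p * q).
Proof. by rewrite mulrC trMl mulrC. Qed.

Definition eqm p q := tr p = tr q.

Lemma eqm_refl p : eqm p p. Proof. by []. Qed.
Lemma eqm_sym p q : eqm p q -> eqm q p. Proof. by []. Qed.
Lemma eqm_trans p q r : eqm p q -> eqm q r -> eqm p r.
Proof. by rewrite /eqm => ->. Qed.
Lemma eqm_tr p : eqm (tr p) p. Proof. exact: tr_tr. Qed.
Lemma eqm_add p p' q q' : eqm p p' -> eqm q q' -> eqm (p + q) (p' + q').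
Proof. by rewrite /eqm !take_polyD => -> ->. Qed.
Lemma eqm_opp p p' : eqm p p' -> eqm (- p) (- p').
Proof. by rewrite /eqm -!scaleN1r !take_polyZ => ->. Qed.
Lemma eqm_scale c p p' : eqm p p' -> eqm (c *: p) (c *: p').
Proof. by rewrite /eqm !take_polyZ => ->. Qed.
Lemma eqm_muln p p' k : eqm p p' -> eqm (p *+ k) (p' *+ k).
Proof.
rewrite /eqm => e; elim: k => [|k IH]; first by rewrite !mulr0n.
by rewrite !mulrS !take_polyD e IH.
Qed.
Lemma eqm_mul p p' q q' : eqm p p' -> eqm q q' -> eqm (p * q) (p' * q').
Proof. by rewrite /eqm => e1 e2; rewrite -trMl e1 trMl -trMr e2 trMr. Qed.
Lemma eqm_exp p p' k : eqm p p' -> eqm (p ^+ k) (p' ^+ k).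
Proof. move=> e; elim: k => [|k IH]; first by []. by rewrite !exprS; apply: eqm_mul. Qed.
Lemma eqm_sum I (r : seq I) (F G : I -> {poly rat}) :
  (forall i, eqm (F i) (G i)) -> eqm (\sum_(i <- r) F i) (\sum_(i <- r) G i).
Proof.
move=> e; elim: r => [|x r IH]; first by rewrite !big_nil.
by rewrite !big_cons; apply: eqm_add.
Qed.
Lemma eqm_prod I (r : seq I) (F G : I -> {poly rat}) :
  (forall i, eqm (F i) (G i)) -> eqm (\prod_(i <- r) F i) (\prod_(i <- r) G i).
Proof.
move=> e; elim: r => [|x r IH]; first by rewrite !big_nil.
by rewrite !big_cons; apply: eqm_mul.
Qed.
Lemma eqm_coef p q i : (i < m)%N -> eqm p q -> p`_i = q`_i.
Proof.
move=> im e; have := congr1 (fun r : {poly rat} => r`_i) e.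
by rewrite /= !coef_take_poly im.
Qed.
Lemma eqm_X_small p : (size p <= m)%N -> tr p = p.
Proof. exact: take_poly_id. Qed.

Lemma tr_Xm_mul p : (p`_0 = 0) -> tr (p ^+ m) = 0.
Proof.
move=> p0.
have -> : p = drop_poly 1 p * 'X^1.
  rewrite -{1}(poly_take_drop 1 p); suff -> : take_poly 1 p = 0 by rewrite add0r.
  apply/polyP => i; rewrite coef_take_poly coef0; case: i => //=.
by rewrite exprMn -exprM mul1n take_polyMXn_0.
Qed.

End Trunc.

Lemma fact_neq0 (i : nat) : (i`!%:R : rat) != 0.
Proof. by rewrite pnatr_eq0 -lt0n fact_gt0. Qed.

Lemma binr (i j : nat) : (j <= i)%N ->
  ('C(i, j))%:R / (i`!)%:R = 1 / ((j`!)%:R * ((i - j)`!)%:R) :> rat.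
Proof.
move=> ji; rewrite -(bin_fact ji) !natrM.
have h1 := fact_neq0 j; have h2 := fact_neq0 (i - j).
have h3 : ('C(i, j)%:R : rat) != 0 by rewrite pnatr_eq0 -lt0n bin_gt0.
field. by rewrite h1 h2 h3.
Qed.

Section Series.
Variable m : nat.
Notation tr := (take_poly m).
Implicit Types p q : {poly rat}.

Lemma invS_spec p : (0 < m)%N -> p`_0 = 1 -> tr (p * invS m p) = 1.
Proof.
move=> m0 p0; rewrite /invS trE trMr.
set q := 1 - p.
have hp : p = 1 - q by rewrite /q opprB addrC subrK.
rewrite {1}hp.
have -> : (1 - q) * \sum_(j < m) q ^+ j = 1 - q ^+ m.
  by rewrite -opprB mulNr -subrX1 opprB.
rewrite take_polyD -scaleN1r take_polyZ tr_Xm_mul ?scaler0 ?addr0.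
  by rewrite take_poly_id // size_poly1.
by rewrite /q coefB coef1 p0 subrr.
Qed.

Lemma invS_coef0 p : (0 < m)%N -> p`_0 = 1 -> (invS m p)`_0 = 1.
Proof.
move=> m0 p0; have := congr1 (fun r : {poly rat} => r`_0) (invS_spec m0 p0).
by rewrite /= coef_take_poly m0 coef0M p0 mul1r coef1.
Qed.

Lemma inv_unique p q q' : tr (p * q) = 1 -> tr (p * q') = 1 -> tr q = tr q'.
Proof.
move=> e e'.
have -> : tr q = tr (q * tr (p * q')) by rewrite e' mulr1.
rewrite trMr mulrA (mulrC q) -trMl e mul1r //.
Qed.

Lemma coef_expS a i : (expS m a)`_i = if (i < m)%N then a ^+ i / (i`!)%:R else 0.
Proof. by rewrite /expS coef_poly. Qed.

Lemma size_expS a : (size (expS m a) <= m)%N.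
Proof. exact: size_poly. Qed.

Lemma expSD a b : tr (expS m a * expS m b) = expS m (a + b).
Proof.
apply/polyP => i; rewrite coef_take_poly coef_expS.
case: ifP => // im; rewrite coefM addrC exprDn mulr_suml.
apply: eq_bigr => j _.
have ji : (j <= i)%N by rewrite -ltnS.
rewrite !coef_expS (leq_ltn_trans ji im) (leq_ltn_trans (leq_subr j i) im).
have h1 := fact_neq0 j; have h2 := fact_neq0 (i - j); have h3 := fact_neq0 i.
have hC : ('C(i, j))%:R = (i`!)%:R / ((j`!)%:R * ((i - j)`!)%:R) :> rat.
  have := binr ji => /(congr1 (fun x => x * (i`!)%:R)).
  rewrite divfK // => ->; field; by rewrite h1 h2.
rewrite -[_ *+ 'C(i, j)]mulr_natr hC; field; by rewrite h1 h2 h3.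
Qed.

Lemma expS0 : (0 < m)%N -> expS m 0 = 1.
Proof.
move=> m0; apply/polyP => i; rewrite coef_expS coef1.
case: i => [|i] /=; first by rewrite m0 expr0 divr1.
by rewrite expr0n /= mul0r; case: ifP.
Qed.

Lemma expS_exp a k : tr (expS m a ^+ k) = tr (expS m (k%:R * a)).
Proof.
elim: k => [|k IH].
  rewrite expr0 mul0r; case: (posnP m) => [->|m0]; first by rewrite !take_poly0l.
  by rewrite expS0.
rewrite exprS -trMr IH trMr expSD take_poly_id ?size_expS //.
by rewrite -{1}(mul1r a) -mulrDl -natr1 addrC.
Qed.

End Series.

Lemma expS_tr m M a : (m <= M)%N -> take_poly m (expS M a) = expS m a.
Proof.
move=> mM; apply/polyP => i; rewrite coef_take_poly !coef_expS.
by case: (ltnP i m) => // im; rewrite (leq_trans im mM).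
Qed.

Lemma coef_scaleS c (p : {poly rat}) i : (scaleS c p)`_i = p`_i * c ^+ i.
Proof.
rewrite /scaleS coef_poly; case: ifP => // /negbT; rewrite -leqNgt => h.
by rewrite nth_default // mul0r.
Qed.

Lemma scaleSM c (p q : {poly rat}) : scaleS c (p * q) = scaleS c p * scaleS c q.
Proof.
apply/polyP => i; rewrite coef_scaleS !coefM mulr_suml; apply: eq_bigr => j _.
rewrite !coef_scaleS.
have ji : (j <= i)%N by rewrite -ltnS.
rewrite -[X in c ^+ X](subnKC ji) exprD; ring.
Qed.

Lemma scaleSD c (p q : {poly rat}) : scaleS c (p + q) = scaleS c p + scaleS c q.
Proof. by apply/polyP => i; rewrite coefD !coef_scaleS coefD mulrDl. Qed.

Lemma scaleSZ c a (p : {poly rat}) : scaleS c (a *: p) = a *: scaleS c p.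
Proof. by apply/polyP => i; rewrite coefZ !coef_scaleS coefZ mulrA. Qed.

Lemma scaleSC c a : scaleS c a%:P = a%:P.
Proof.
apply/polyP => i; rewrite coef_scaleS !coefC.
by case: i => [|i] //=; rewrite ?expr0 ?mulr1 ?mul0r.
Qed.

Lemma scaleS1 c : scaleS c 1 = 1.
Proof. exact: scaleSC. Qed.

Lemma scaleSX c : scaleS c 'X = c *: 'X.
Proof.
apply/polyP => i; rewrite coef_scaleS coefZ !coefX.
by case: eqP => [->|_]; rewrite /= ?expr1 ?mul1r ?mulr1 ?mul0r ?mulr0.
Qed.

Lemma scaleSB c (p q : {poly rat}) : scaleS c (p - q) = scaleS c p - scaleS c q.
Proof. by rewrite -scaleN1r scaleSD scaleSZ scaleN1r. Qed.

Lemma scaleS_expS c m a : scaleS c (expS m a) = expS m (c * a).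
Proof.
apply/polyP => i; rewrite coef_scaleS !coef_expS.
by case: ifP; rewrite ?mul0r // exprMn; move=> _; ring.
Qed.

Lemma tr_scaleS m c (p : {poly rat}) : take_poly m (scaleS c p) = scaleS c (take_poly m p).
Proof.
apply/polyP => i; rewrite coef_take_poly !coef_scaleS coef_take_poly.
by case: ifP; rewrite ?mul0r.
Qed.

Lemma size_scaleS c (p : {poly rat}) : (size (scaleS c p) <= size p)%N.
Proof. exact: size_poly. Qed.

Lemma natS1_neq0 (i : nat) : (1 + i%:R : rat) != 0.
Proof. by rewrite -(natrD _ 1 i) pnatr_eq0. Qed.
Lemma natS2_neq0 (i : nat) : (2 + i%:R : rat) != 0.
Proof. by rewrite -(natrD _ 2 i) pnatr_eq0. Qed.
Lemma natS1'_neq0 (i : nat) : (i%:R + 1 : rat) != 0.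
Proof. by rewrite addrC natS1_neq0. Qed.
Ltac fside := repeat (apply/andP; split); rewrite ?fact_neq0 ?natS1_neq0 ?natS2_neq0 ?natS1'_neq0 //.

Definition Ups (m : nat) : {poly rat} := \poly_(i < m) ((-1) ^+ i / (i.+1`!)%:R).

Lemma coef_Ups m i : (Ups m)`_i = if (i < m)%N then (-1) ^+ i / (i.+1`!)%:R else 0.
Proof. by rewrite coef_poly. Qed.

Lemma size_Ups m : (size (Ups m) <= m)%N.
Proof. exact: size_poly. Qed.

Lemma Ups0 m : (0 < m)%N -> (Ups m)`_0 = 1.
Proof. by move=> m0; rewrite coef_Ups m0 expr0 divr1. Qed.

Lemma todd_spec m : (0 < m)%N -> take_poly m (Ups m * toddS m) = 1.
Proof. by move=> m0; apply: invS_spec => //; apply: Ups0. Qed.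

Lemma todd0 m : (0 < m)%N -> (toddS m)`_0 = 1.
Proof. by move=> m0; apply: invS_coef0 => //; apply: Ups0. Qed.

Lemma XUps m : 'X * Ups m = 1 - expS m.+1 (-1).
Proof.
apply/polyP => i; rewrite coefXM coefB coef1 coef_expS.
case: i => [|i] /=; first by rewrite expr0 divr1 subrr.
rewrite coef_Ups ltnS; case: ifP => _; last by rewrite subr0.
by rewrite sub0r exprS mulN1r mulNr opprK.
Qed.

Definition th (p : {poly rat}) := 'X * p^`().

Lemma coef_th p i : (th p)`_i = p`_i * i%:R.
Proof.
rewrite /th coefXM; case: i => [|i] /=; first by rewrite mulr0.
by rewrite coef_deriv mulr_natr.
Qed.

Lemma thM p q : th (p * q) = th p * q + p * th q.
Proof. by rewrite /th derivM; ring. Qed.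

Lemma thX p k : th (p ^+ k.+1) = th p * p ^+ k *+ k.+1.
Proof. by rewrite /th deriv_exp /= mulrnAr mulrA. Qed.

Lemma th1 : th 1 = 0.
Proof. by rewrite /th -polyC1 derivC mulr0. Qed.

Lemma tr_th m p : take_poly m (th p) = th (take_poly m p).
Proof.
apply/polyP => i; rewrite coef_take_poly !coef_th coef_take_poly.
by case: ifP; rewrite ?mul0r.
Qed.

Section Theta.
Variable m : nat.
Hypothesis m0 : (0 < m)%N.
Notation tr := (take_poly m).
Notation eqm := (eqm m).
Notation T := (toddS m).
Notation U := (Ups m).

Lemma th_E t : eqm (th (expS m t)) (t *: ('X * expS m t)).
Proof.
rewrite /Submission.eqm; apply/polyP => i; rewrite !coef_take_poly coef_th coefZ coefXM !coef_expS.
case: ifP => // im; case: i im => [|i] im /=; first by rewrite mulr0 mulr0.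
rewrite (ltn_trans (ltnSn i) im) factS natrM exprS.
have h := fact_neq0 i; have h1 : (i.+1%:R : rat) != 0 by rewrite pnatr_eq0.
rewrite im; field; fside.
Qed.

Lemma th_U : eqm (th U) (1 - (1 + 'X) * U).
Proof.
rewrite /Submission.eqm; apply/polyP => i; rewrite !coef_take_poly.
case: ifP => // im.
rewrite coef_th coefB coef1 mulrDl mul1r coefD coefXM !coef_Ups im.
case: i im => [|i] im /=; first by rewrite expr0 mulr0 addr0 divr1 subrr.
rewrite (ltn_trans (ltnSn i) im) !factS !natrM !exprS sub0r.
field; fside.
Qed.

Lemma UT : eqm (U * T) 1.
Proof.
rewrite /Submission.eqm todd_spec // take_poly_id // size_poly1 //.
Qed.

Lemma eqm_eq p q : p = q -> eqm p q.
Proof. by move=> ->. Qed.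

Lemma th_T : eqm (th T) (T * (1 + 'X) - T ^+ 2).
Proof.
have e0 : eqm (th U * T + U * th T) 0.
  rewrite /Submission.eqm -thM tr_th.
  have := UT; rewrite /Submission.eqm => ->.
  by rewrite take_poly_id ?size_poly1 // th1 take_poly0r.
have e1 : eqm (T * T * th U + (U * T) * th T) 0.
  have := eqm_mul (eqm_refl m T) e0; rewrite mulr0.
  by apply: eqm_trans; apply: eqm_eq; ring.
have e2 : eqm (T * T * th U + th T) 0.
  apply: eqm_trans e1; apply: eqm_add; first exact: eqm_refl.
  by rewrite -{1}(mul1r (th T)); apply: eqm_mul; [apply: eqm_sym; apply: UT|apply: eqm_refl].
have e3 : eqm (th T) (- (T * T * th U)).
  have -> : th T = (T * T * th U + th T) - T * T * th U by ring.
  by rewrite -[X in eqm _ X]add0r; apply: eqm_add => //; apply: eqm_refl.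
apply: eqm_trans e3 _.
apply: (@eqm_trans _ _ (- (T * T * (1 - (1 + 'X) * U)))).
  by apply: eqm_opp; apply: eqm_mul; [apply: eqm_refl|apply: th_U].
have -> : - (T * T * (1 - (1 + 'X) * U)) = T * (1 + 'X) * (U * T) - T ^+ 2 by ring.
apply: eqm_add; last exact: eqm_refl.
by rewrite -[X in eqm _ X]mulr1; apply: eqm_mul; [apply: eqm_refl|apply: UT].
Qed.

Lemma theta_step t j : (j.+1 < m)%N ->
  (expS m t * T ^+ j.+2)`_j.+1 * j.+1%:R = (t + j.+1%:R) * (expS m t * T ^+ j.+1)`_j.
Proof.
move=> jm.
set E := expS m t.
have e1 : eqm (th (E * T ^+ j.+1))
   (t%:P * ('X * (E * T ^+ j.+1)) + (E * T ^+ j.+1 + 'X * (E * T ^+ j.+1) - E * T ^+ j.+2) *+ j.+1).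
  rewrite thM thX.
  apply: (@eqm_trans _ _ ((t *: ('X * E)) * T ^+ j.+1 + E * ((T * (1 + 'X) - T ^+ 2) * T ^+ j *+ j.+1))).
    apply: eqm_add.
      by apply: eqm_mul; [exact: th_E|exact: (eqm_refl m (T ^+ j.+1))].
    apply: eqm_mul; first exact: (eqm_refl m E).
    apply: eqm_muln.
    by apply: eqm_mul; [apply: th_T|exact: (eqm_refl m (T ^+ j))].
  apply: eqm_eq; rewrite -mul_polyC !exprS; ring.
have := eqm_coef jm e1.
rewrite coef_th coefD coefCM coefXM /= coefMn !coefB coefD coefXM /=.
rewrite -[_ *+ j.+1]mulr_natr => h.
set a := (E * T ^+ j.+1)`_j.+1 in h *; set b := (E * T ^+ j.+1)`_j in h *.
set c := (E * T ^+ j.+2)`_j.+1 in h *.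
rewrite ?mul1r in h.
apply/eqP; rewrite -subr_eq0; apply/eqP.
rewrite ?mul1r in h *. rewrite -[_ *+ j.+1]mulr_natr -natr1 in h.

lra.
Qed.


Lemma gbinom0 x : gbinom x 0 = 1.
Proof. by rewrite /gbinom big_ord0 divr1. Qed.

Lemma gbinomS x j : gbinom (x + 1) j.+1 = (x + 1) / j.+1%:R * gbinom x j.
Proof.
rewrite /gbinom big_ord_recl subr0 factS natrM.
have -> : \prod_(i < j) (x + 1 - (lift ord0 i)%:R) = \prod_(i < j) (x - i%:R).
  by apply: eq_bigr => i _; rewrite lift0 -natr1; ring.
have h := fact_neq0 j.
field; fside.
Qed.

Lemma theta_f t j : (j < m)%N -> (expS m t * T ^+ j.+1)`_j = gbinom (t + j%:R) j.
Proof.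
elim: j => [|j IH] jm.
  by rewrite expr1 coef0M todd0 // coef_expS m0 expr0 divr1 mulr1 gbinom0.
have h := theta_step t jm.
rewrite IH ?(ltn_trans (ltnSn j)) // in h.
rewrite -natr1 addrA gbinomS.
have hj : (j.+1%:R : rat) != 0 by rewrite pnatr_eq0.
apply: (mulIf hj); rewrite h -natr1; field.
by rewrite natr1.
Qed.

End Theta.

Definition W (m c : nat) : {poly rat} := \sum_(j < c) expS m (-1) ^+ j.

Lemma XtrS m (p : {poly rat}) : take_poly m.+1 ('X * p) = 'X * take_poly m p.
Proof.
by rewrite mulrC -{1}(expr1 'X) take_polyMXn subSS subn0 expr1 mulrC.
Qed.

Lemma tr_expS m a : take_poly m (expS m a) = expS m a.
Proof. by rewrite take_poly_id // size_expS. Qed.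

Lemma tr_1 m : (0 < m)%N -> take_poly m (1 : {poly rat}) = 1.
Proof. by move=> m0; rewrite take_poly_id // size_poly1. Qed.

Lemma tr_C m (a : rat) : (0 < m)%N -> take_poly m a%:P = a%:P.
Proof. by move=> m0; rewrite take_poly_id // (leq_trans (size_polyC_leq1 a)). Qed.

Lemma claimB m c : eqm m (Ups m * W m c) (c%:R *: scaleS c%:R (Ups m)).
Proof.
have h1 : 'X * (c%:R *: scaleS c%:R (Ups m)) = 1 - expS m.+1 (- c%:R).
  have := congr1 (scaleS c%:R) (XUps m).
  rewrite scaleSM scaleSX scaleSB scaleS1 scaleS_expS mulrN1 => <-.
  by rewrite -scalerAl scalerAr.
have h2 : take_poly m.+1 ('X * (Ups m * W m.+1 c)) = 1 - expS m.+1 (- c%:R).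
  rewrite mulrA XUps /W.
  have -> : (1 - expS m.+1 (-1)) * (\sum_(j < c) expS m.+1 (-1) ^+ j)
          = 1 - expS m.+1 (-1) ^+ c.
    by rewrite -opprB mulNr -subrX1 opprB.
  rewrite linearB /= expS_exp tr_1 // tr_expS.
  by rewrite mulrN1.
have h3 : take_poly m.+1 ('X * (c%:R *: scaleS c%:R (Ups m))) = 1 - expS m.+1 (- c%:R).
  by rewrite h1 linearB /= tr_1 // tr_expS.
have h4 : eqm m (Ups m * W m.+1 c) (c%:R *: scaleS c%:R (Ups m)).
  rewrite /eqm; have hX : ('X : {poly rat}) != 0 by rewrite polyX_eq0.
  apply: (mulfI hX).
  by rewrite -!XtrS h2 h3.
apply: eqm_trans h4.
apply: eqm_mul; first exact: eqm_refl.
apply: eqm_sum => j; apply: eqm_exp.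
by rewrite /eqm tr_expS expS_tr.
Qed.


Lemma eqm_expSD m a b : eqm m (expS m a * expS m b) (expS m (a + b)).
Proof. by rewrite /eqm expSD tr_expS. Qed.

Lemma QS0 m s : (0 < m)%N -> (QS s m)`_0 = 1.
Proof.
move=> m0; rewrite /QS trE coef_take_poly m0 coef0M todd0 // coef_expS m0.
by rewrite expr0 divr1 mulr1.
Qed.

Lemma eqm_QS m s : eqm m (QS s m) (expS m (- s) * toddS m).
Proof. exact: eqm_tr. Qed.

Lemma claimA m s c : (0 < m)%N ->
  eqm m (scaleS c%:R (QS s m) * (expS m (s * c%:R) * (Ups m * W m c))) (c%:R)%:P.
Proof.
move=> m0.
have e1 : eqm m (scaleS c%:R (QS s m)) (expS m (c%:R * - s) * scaleS c%:R (toddS m)).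
  rewrite /eqm /QS trE -tr_scaleS tr_tr tr_scaleS.
  by rewrite -tr_scaleS scaleSM scaleS_expS.
apply: (@eqm_trans _ _ (expS m (c%:R * - s) * scaleS c%:R (toddS m) * (expS m (s * c%:R) * (Ups m * W m c)))).
  by apply: eqm_mul; [exact: e1|exact: eqm_refl].
have -> : expS m (c%:R * - s) * scaleS c%:R (toddS m) * (expS m (s * c%:R) * (Ups m * W m c))
   = (expS m (c%:R * - s) * expS m (s * c%:R)) * (scaleS c%:R (toddS m) * (Ups m * W m c)) by ring.
apply: (@eqm_trans _ _ (1 * (scaleS c%:R (toddS m) * (c%:R *: scaleS c%:R (Ups m))))).
  apply: eqm_mul.
    apply: eqm_trans (eqm_expSD _ _ _) _.
    by rewrite mulrN mulrC addNr expS0 //; exact: eqm_refl.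
  by apply: eqm_mul; [exact: eqm_refl|exact: claimB].
rewrite mul1r -scalerAr -scaleSM.
rewrite /eqm linearZ /= tr_scaleS.
have := UT m0; rewrite /Submission.eqm tr_1 // mulrC => ->.
by rewrite scaleS1 -alg_polyC linearZ /= tr_1.
Qed.

Lemma coef0_prod (r : seq nat) (F : nat -> {poly rat}) :
  (\prod_(x <- r) F x)`_0 = \prod_(x <- r) (F x)`_0.
Proof.
elim: r => [|x r IH]; first by rewrite !big_nil coef1.
by rewrite !big_cons coef0M IH.
Qed.

Lemma prod_split3 (r : seq nat) (A B : nat -> {poly rat}) (u : {poly rat}) :
  \prod_(c <- r) (A c * (u * B c)) = (\prod_(c <- r) A c) * (u ^+ size r * \prod_(c <- r) B c).
Proof.
elim: r => [|x r IH]; first by rewrite !big_nil expr0 !mul1r.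
by rewrite !big_cons IH /= exprS; ring.
Qed.

Lemma prod_expS m s (r : seq nat) :
  eqm m (\prod_(c <- r) expS m (s * c%:R)) (expS m (s * (\sum_(c <- r) c)%:R)).
Proof.
case: (posnP m) => [->|m0]; first by rewrite /eqm !take_poly0l.
elim: r => [|x r IH]; first by rewrite !big_nil mulr0 expS0.
rewrite !big_cons.
apply: eqm_trans (eqm_mul (eqm_refl m _) IH) _.
by apply: eqm_trans (eqm_expSD _ _ _) _; rewrite natrD mulrDr; exact: eqm_refl.
Qed.

Lemma chiK_eq n d s : all (fun x => x != 0)%N d ->
  chiK n d s = (QS s n.+1 ^+ (n + size d + 1) *
     \prod_(c <- d) (expS n.+1 (s * c%:R) * (Ups n.+1 * W n.+1 c)))`_n.
Proof.
move=> dnz.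
have m0 : (0 < n.+1)%N by [].
rewrite /chiK /= !trE.
set m := n.+1.
set Den := take_poly m (\prod_(di <- d) scaleS di%:R (QS s m)).
set Iv := \prod_(c <- d) (expS m (s * c%:R) * (Ups m * W m c)).
set P := \prod_(di <- d) (di%:R : rat).
have Pnz : P != 0.
  rewrite /P; move: dnz; clear; elim: d => [|x r IH]; first by rewrite big_nil oner_neq0.
  by rewrite big_cons /= => /andP [hx hr]; rewrite mulf_neq0 ?IH // pnatr_eq0.
have hDen : eqm m (Den * Iv) P%:P.
  apply: (@eqm_trans _ _ (\prod_(c <- d) (scaleS c%:R (QS s m) * (expS m (s * c%:R) * (Ups m * W m c))))).
    rewrite big_split /=; apply: eqm_mul; [exact: eqm_tr|exact: eqm_refl].
  apply: eqm_trans (eqm_prod _ (fun c => claimA s c m0)) _.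
  by rewrite /P rmorph_prod; exact: eqm_refl.
have hinv : take_poly m (Den * invS m Den) = 1.
  apply: invS_spec => //.
  rewrite /Den coef_take_poly m0 coef0_prod big1_seq // => c _.
  by rewrite coef_scaleS QS0 // expr0 mulr1.
have hinv' : take_poly m (Den * (P^-1 *: Iv)) = 1.
  rewrite -scalerAr linearZ /= hDen tr_C //.
  by rewrite -mul_polyC -polyCM mulVf.
have hI : eqm m (invS m Den) (P^-1 *: Iv) by apply: (inv_unique hinv hinv').
rewrite coef_take_poly ltnSn.
rewrite (eqm_coef (ltnSn n) (eqm_mul (eqm_refl m _) hI)).
by rewrite -scalerAr coefZ mulrA mulfV // mul1r.
Qed.

Definition hpoly (d : seq nat) : {poly rat} := \prod_(c <- d) \sum_(j < c) 'X^j.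

Definition c1r (n : nat) (d : seq nat) : rat := (n + size d + 1)%:R - (\sum_(c <- d) c)%:R.

Lemma Wprod_h m d : \prod_(c <- d) W m c =
  \sum_(i < size (hpoly d)) ((hpoly d)`_i)%:P * expS m (-1) ^+ i.
Proof.
have -> : \prod_(c <- d) W m c = (map_poly polyC (hpoly d)).[expS m (-1)].
  rewrite /hpoly rmorph_prod horner_prod; apply: eq_bigr => c _.
  rewrite rmorph_sum horner_sum; apply: eq_bigr => j _.
  by rewrite rmorphXn /= map_polyX horner_exp hornerX.
rewrite horner_coef size_map_polyC; apply: eq_bigr => i _.
by rewrite coef_map.
Qed.

Lemma chiK_sum n d s : all (fun x => x != 0)%N d ->
  chiK n d s = \sum_(i < size (hpoly d)) (hpoly d)`_i * gbinom (- (s * c1r n d) - i%:R + n%:R) n.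
Proof.
move=> dnz; rewrite chiK_eq // prod_split3.
have m0 : (0 < n.+1)%N by [].
set m := n.+1.
set A := \prod_(c <- d) expS m (s * c%:R).
set Wp := \prod_(c <- d) W m c.
set R := (n + size d + 1)%N.
have e : eqm m (QS s m ^+ R * (A * (Ups m ^+ size d * Wp)))
               (expS m (- (s * c1r n d)) * toddS m ^+ n.+1 * Wp).
  apply: (@eqm_trans _ _ (expS m (R%:R * - s) * toddS m ^+ R *
                          (expS m (s * (\sum_(c <- d) c)%:R) * (Ups m ^+ size d * Wp)))).
    apply: eqm_mul; last by apply: eqm_mul; [exact: prod_expS|exact: eqm_refl].
    apply: eqm_trans (eqm_exp R (eqm_QS m s)) _.
    rewrite exprMn; apply: eqm_mul; last exact: eqm_refl.
    by rewrite /eqm expS_exp.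
  have -> : toddS m ^+ R = toddS m ^+ n.+1 * toddS m ^+ size d.
    by rewrite -exprD /R addn1 addSn.
  have -> : expS m (R%:R * - s) * (toddS m ^+ n.+1 * toddS m ^+ size d) *
      (expS m (s * (\sum_(c <- d) c)%:R) * (Ups m ^+ size d * Wp)) =
      (expS m (R%:R * - s) * expS m (s * (\sum_(c <- d) c)%:R)) * toddS m ^+ n.+1 *
      (Ups m * toddS m) ^+ size d * Wp by rewrite exprMn; ring.
  have -> : expS m (- (s * c1r n d)) * toddS m ^+ n.+1 * Wp =
            expS m (- (s * c1r n d)) * toddS m ^+ n.+1 * 1 * Wp by rewrite mulr1.
  apply: eqm_mul; last exact: eqm_refl.
  apply: eqm_mul.
    apply: eqm_mul; last exact: eqm_refl.
    apply: eqm_trans (eqm_expSD _ _ _) _; apply: eqm_eq; congr expS.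
    by rewrite /c1r /R; ring.
  rewrite -(expr1n _ (size d)); apply: eqm_exp; exact: UT.
rewrite (eqm_coef (ltnSn n) e) /Wp Wprod_h mulr_sumr coef_sum.
apply: eq_bigr => i _.
rewrite mulrCA coefCM; congr (_ * _).
have e2 : eqm m (expS m (- (s * c1r n d)) * toddS m ^+ n.+1 * expS m (-1) ^+ i)
                (expS m (- (s * c1r n d) - i%:R) * toddS m ^+ n.+1).
  rewrite mulrAC; apply: eqm_mul; last exact: eqm_refl.
  apply: (@eqm_trans _ _ (expS m (- (s * c1r n d)) * expS m (i%:R * -1))).
    by apply: eqm_mul; [exact: eqm_refl|rewrite /eqm expS_exp].
  by apply: eqm_trans (eqm_expSD _ _ _) _; rewrite mulrN1; exact: eqm_refl.
by rewrite (eqm_coef (ltnSn n) e2) theta_f.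
Qed.

Definition Wq (c : nat) : {poly rat} := \sum_(j < c) 'X^j.

Lemma Wq_poly c : Wq c = \poly_(j < c) 1.
Proof. by rewrite poly_def; apply: eq_bigr => j _; rewrite scale1r. Qed.

Lemma coef_Wq c j : (Wq c)`_j = if (j < c)%N then 1 else 0.
Proof. by rewrite Wq_poly coef_poly. Qed.

Lemma size_Wq c : (size (Wq c) <= c)%N.
Proof. by rewrite Wq_poly size_poly. Qed.

Lemma hpoly_cons c d : hpoly (c :: d) = Wq c * hpoly d.
Proof. by rewrite /hpoly big_cons. Qed.

Definition ed (d : seq nat) : nat := \sum_(c <- d) c.-1.

Lemma ed_cons c d : ed (c :: d) = (c.-1 + ed d)%N.
Proof. by rewrite /ed big_cons. Qed.

Definition rv (e : nat) (p : {poly rat}) : {poly rat} := \poly_(i < e.+1) p`_(e - i).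

Lemma coef_rv e p i : (rv e p)`_i = if (i < e.+1)%N then p`_(e - i) else 0.
Proof. by rewrite coef_poly. Qed.

Lemma rvD e p q : rv e (p + q) = rv e p + rv e q.
Proof. by apply/polyP => i; rewrite coefD !coef_rv coefD; case: ifP; rewrite ?addr0. Qed.

Lemma rv0 e : rv e 0 = 0.
Proof. by apply/polyP => i; rewrite coef_rv !coef0; case: ifP. Qed.

Lemma rv_sum e (I : Type) (r : seq I) (F : I -> {poly rat}) :
  rv e (\sum_(i <- r) F i) = \sum_(i <- r) rv e (F i).
Proof.
elim: r => [|x r IH]; first by rewrite !big_nil rv0.
by rewrite !big_cons rvD IH.
Qed.

Lemma rv_Xh c e (h : {poly rat}) j : (j < c)%N -> (size h <= e.+1)%N ->
  rv (c.-1 + e) ('X^j * h) = 'X^(c.-1 - j) * rv e h.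
Proof.
move=> jc hs; apply/polyP => l.
have hz : forall k, (e < k)%N -> h`_k = 0 by move=> k hk; rewrite nth_default // (leq_trans hs hk).
rewrite coef_rv !coefXnM coef_rv.
case: (ltnP l (c.-1 + e).+1) => H1; case: (ltnP (c.-1 + e - l) j) => H2;
  case: (ltnP l (c.-1 - j)) => H3; case: (ltnP (l - (c.-1 - j)) e.+1) => H4;
  first [ done | (exfalso; lia) | (rewrite hz; [done|lia]) | (congr (nth _ _ _); lia) ].
Qed.


Lemma hpal d : all (fun c => 0 < c)%N d ->
  (size (hpoly d) <= (ed d).+1)%N /\ rv (ed d) (hpoly d) = hpoly d.
Proof.
elim: d => [|c d IH] /=.
  rewrite /hpoly /ed !big_nil size_poly1; split => //.
  by apply/polyP => i; rewrite coef_rv !coef1; case: i.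
move=> /andP [c0 hd]; have [IH1 IH2] := IH hd.
rewrite hpoly_cons ed_cons; split.
  apply: (leq_trans (size_mul_leq _ _)).
  rewrite -!subn1; apply: (@leq_trans ((c + (ed d).+1) - 1)); last by lia.
  by apply: leq_sub2r; apply: leq_add; [exact: size_Wq|exact: IH1].
rewrite {1}/Wq mulr_suml rv_sum.
rewrite (eq_bigr (fun j : 'I_c => 'X^(c.-1 - j) * hpoly d)); last first.
  by move=> j _; rewrite rv_Xh // IH2.
transitivity ((\sum_(j < c) 'X^(c.-1 - j)) * hpoly d); first by rewrite mulr_suml.
rewrite -[RHS]mulr_suml; apply: (congr1 (fun x => x * hpoly d)).
rewrite -(big_mkord xpredT (fun j => 'X^(c.-1 - j))) -(big_mkord xpredT (fun j => 'X^j)).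
rewrite big_nat_rev /= add0n; apply: eq_big_nat => j hj.
by congr ('X^_); lia.
Qed.

Lemma h_sym d i : all (fun c => 0 < c)%N d -> (i <= ed d)%N ->
  (hpoly d)`_i = (hpoly d)`_(ed d - i).
Proof.
move=> hd hi; have [_ e] := hpal hd.
by rewrite -{1}e coef_rv ltnS hi.
Qed.

Lemma h_zero d i : all (fun c => 0 < c)%N d -> (ed d < i)%N -> (hpoly d)`_i = 0.
Proof.
move=> hd hi; have [s _] := hpal hd.
by rewrite nth_default // (leq_trans s hi).
Qed.

Lemma h_0 d : all (fun c => 0 < c)%N d -> (hpoly d)`_0 = 1.
Proof.
move=> hd; rewrite /hpoly coef0_prod big1_seq // => c /andP [_ hc].
by rewrite coef_Wq (allP hd c hc).
Qed.

Lemma h_ge d : all (fun c => 0 < c)%N d ->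
  forall i, 0 <= (hpoly d)`_i /\ ((i <= ed d)%N -> 1 <= (hpoly d)`_i).
Proof.
elim: d => [|c d IH] /=.
  move=> _ i; rewrite /hpoly /ed !big_nil coef1; split; first by case: (i == 0%N).
  by rewrite leqn0 => /eqP ->.
move=> /andP [c0 hd] l; have IHl := IH hd.
rewrite hpoly_cons ed_cons coefM.
have tge : forall k : 'I_l.+1, 0 <= (Wq c)`_k * (hpoly d)`_(l - k).
  by move=> k; rewrite mulr_ge0 ?(proj1 (IHl _)) // coef_Wq; case: ifP.
split; first by apply: sumr_ge0 => k _; apply: tge.
move=> hl.
have hk0 : (l - ed d < l.+1)%N by lia.
rewrite (bigD1 (Ordinal hk0)) //=.
have h1 : 1 <= (Wq c)`_(l - ed d) * (hpoly d)`_(l - (l - ed d)).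
  rewrite coef_Wq ifT; last by lia.
  by rewrite mul1r; apply: (proj2 (IHl _)); lia.
have h2 : 0 <= \sum_(i < l.+1 | i != Ordinal hk0) (Wq c)`_i * (hpoly d)`_(l - i).
  by apply: sumr_ge0 => k _; apply: tge.
lra.
Qed.

Lemma gbinom_pascal x k : gbinom (x + 1) k.+1 = gbinom x k.+1 + gbinom x k.
Proof.
rewrite /gbinom big_ord_recl big_ord_recr /= subr0.
have -> : \prod_(i < k) (x + 1 - (lift ord0 i)%:R) = \prod_(i < k) (x - i%:R).
  by apply: eq_bigr => i _; rewrite lift0 -natr1; ring.
rewrite factS natrM.
have h := fact_neq0 k.
field; fside.
Qed.

Lemma gbinom_ge0 x k : k%:R - 1 <= x -> 0 <= gbinom x k.
Proof.
move=> hx; rewrite /gbinom divr_ge0 //; apply: prodr_ge0 => i _.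
have hi : (i.+1%:R : rat) <= k%:R by rewrite ler_nat ltn_ord.
rewrite -natr1 in hi; lra.
Qed.

Lemma prod_fact k : \prod_(i < k) (k%:R - i%:R : rat) = (k`!)%:R.
Proof.
elim: k => [|k IH]; first by rewrite big_ord0.
rewrite big_ord_recl subr0 factS natrM.
congr (_ * _); rewrite -IH; apply: eq_bigr => i _.
by rewrite lift0 -!natr1; ring.
Qed.

Lemma gbinom_nn k : gbinom k%:R k = 1.
Proof. by rewrite /gbinom prod_fact divff // fact_neq0. Qed.

Section Gz.
Variable n : nat.

Definition Gz (x : int) : rat := gbinom (n%:R + x%:~R) n.

Lemma Gz0 : Gz 0 = 1.
Proof. by rewrite /Gz addr0 gbinom_nn. Qed.

Lemma Gz_refl x : Gz x = (-1) ^+ n * Gz (- x - n%:Z - 1).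
Proof.
rewrite /Gz /gbinom mulrA; congr (_ / _).
rewrite (reindex_inj rev_ord_inj) /=.
have -> : \prod_(i < n) (n%:R + x%:~R - (n - i.+1)%:R) =
          \prod_(i < n) - (n%:R + (- x - n%:Z - 1)%:~R - i%:R : rat).
  apply: eq_bigr => i _; rewrite natrB ?ltn_ord // rmorphB rmorphB /= rmorphN /=.
  by rewrite -natr1; ring.
by rewrite prodrN card_ord.
Qed.

Lemma Gz_mid x : - (n%:Z) <= x -> x < 0 -> Gz x = 0.
Proof.
case: x => [p|y] h1 h2; first by [].
rewrite NegzE in h1 *.
have yn : (y < n)%N by lia.
have hk : (n - y.+1 < n)%N by lia.
rewrite /Gz /gbinom (bigD1 (Ordinal hk)) //=.
rewrite natrB // rmorphN /=.
have -> : (n%:R + - (y.+1)%:~R - (n%:R - y.+1%:R) : rat) = 0 by ring.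
by rewrite !mul0r.
Qed.

Lemma Gz_split x : Gz x = (if 0 <= x then Gz x else 0) +
   (-1) ^+ n * (if 0 <= - x - n%:Z - 1 then Gz (- x - n%:Z - 1) else 0).
Proof.
case: ifP => h1; case: ifP => h2.
- exfalso; lia.
- by rewrite mulr0 addr0.
- by rewrite add0r -Gz_refl.
- by rewrite mulr0 addr0 Gz_mid //; lia.
Qed.

Lemma Gz_ge0 (p : nat) : 0 <= Gz p.
Proof.
rewrite /Gz; apply: gbinom_ge0.
have : (0 : rat) <= p%:R by rewrite ler0n.
rewrite pmulrn; lra.
Qed.

Lemma Gz_S (p : nat) : Gz p <= Gz p.+1.
Proof.
case: (posnP n) => [n0|n0]; first by rewrite /Gz n0 !gbinom0.
have [n' En] : exists n', n = n'.+1 by exists n.-1; lia.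
rewrite /Gz En.
have -> : (n'.+1%:R + (p.+1%:Z)%:~R : rat) = (n'.+1%:R + (p%:Z)%:~R) + 1.
  by rewrite -!pmulrn -[p.+1%:R]natr1; ring.
rewrite gbinom_pascal lerDl; apply: gbinom_ge0.
have : (0 : rat) <= p%:R by rewrite ler0n.
rewrite pmulrn -natr1; lra.
Qed.

Lemma Gz_mono (p q : nat) : (p <= q)%N -> Gz p <= Gz q.
Proof.
move=> pq; rewrite -(subnKC pq); elim: (q - p)%N => [|k IH]; first by rewrite addn0.
by apply: le_trans IH _; rewrite addnS; apply: Gz_S.
Qed.

Lemma hockey (v : nat) :
  gbinom (n.+1%:R + v%:R) n.+1 = \sum_(0 <= i < v.+1) Gz (v - i)%N.
Proof.
elim: v => [|v IH].
  by rewrite big_nat1 addr0 gbinom_nn subnn Gz0.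
rewrite big_nat_recl // subn0.
have e1 : \sum_(0 <= i < v.+1) Gz (v.+1 - i.+1)%N = \sum_(0 <= i < v.+1) Gz (v - i)%N.
  by apply: eq_bigr => i _; rewrite subSS.
rewrite e1 -IH -[(v.+1)%:R]natr1 addrA gbinom_pascal [RHS]addrC.
congr (_ + _).
by rewrite /Gz -pmulrn -!natrD addSnnS.
Qed.

End Gz.

Section Comb.
Variables (n : nat) (h : nat -> rat) (E : nat).
Hypothesis hsym : forall i, (i <= E)%N -> h i = h (E - i).
Hypothesis hge1 : forall i, (i <= E)%N -> 1 <= h i.

Definition Hf (t : int) : rat :=
  \sum_(0 <= i < E.+1) h i * (if i%:Z <= t then Gz n (t - i%:Z) else 0).

Lemma sum_split (a : int) :
  \sum_(0 <= i < E.+1) h i * Gz n (- a - i%:Z) =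
  Hf (- a) + (-1) ^+ n * Hf (a - (n%:Z + 1 - E%:Z)).
Proof.
rewrite (eq_bigr (fun i => h i * (if i%:Z <= - a then Gz n (- a - i%:Z) else 0) +
   (-1) ^+ n * (h i * (if 0 <= - (- a - i%:Z) - n%:Z - 1 then Gz n (- (- a - i%:Z) - n%:Z - 1) else 0)))); last first.
  by move=> i _; rewrite {1}Gz_split mulrDr subr_ge0 mulrCA.
rewrite big_split /= -mulr_sumr; congr (_ + (_ * _)).
rewrite /Hf big_nat_rev /= add0n; apply: eq_big_nat => i /andP [_ hi].
rewrite subSS -hsym; last by lia.
have -> : - (- a - (E - i)%N%:Z) - n%:Z - 1 = a - (n%:Z + 1 - E%:Z) - i%:Z.
  rewrite -subzn; last by lia.
  ring.
by rewrite subr_ge0.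
Qed.

Lemma Hf_nat (v : nat) : (v <= E)%N ->
  Hf v = \sum_(0 <= i < v.+1) h i * Gz n (v - i)%N.
Proof.
move=> vE; rewrite /Hf (big_cat_nat _ (n := v.+1)) //=.
rewrite [X in _ + X]big1_seq ?addr0; last first.
  move=> i /andP [_]; rewrite mem_index_iota => /andP [h1 _].
  by rewrite ifF ?mulr0 //; apply/negbTE; rewrite -ltNge; lia.
apply: eq_big_nat => i /andP [_ hi].
by rewrite ifT ?subzn //; lia.
Qed.

Lemma Hf_neg t : t < 0 -> Hf t = 0.
Proof.
move=> ht; rewrite /Hf big1 // => i _.
by rewrite ifF ?mulr0 //; apply/negbTE; rewrite -ltNge; lia.
Qed.

Lemma Hf0 : h 0 = 1 -> Hf 0 = 1.
Proof. by move=> h0; rewrite (Hf_nat (leq0n E)) big_nat1 h0 subnn Gz0 mulr1. Qed.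

Definition Dv (v : nat) := Hf v - gbinom (n.+1%:R + v%:R) n.+1.

Lemma D_eq v : (v <= E)%N ->
  Dv v = \sum_(0 <= i < v.+1) (h i - 1) * Gz n (v - i)%N.
Proof.
move=> vE; rewrite /Dv Hf_nat // hockey -sumrB; apply: eq_bigr => i _.
by rewrite mulrBl mul1r.
Qed.

Lemma D_ge0 v : (v <= E)%N -> 0 <= Dv v.
Proof.
move=> vE; rewrite D_eq // big_seq_cond; apply: sumr_ge0 => i /andP [+ _]; rewrite mem_index_iota => /andP [_ hi].
rewrite mulr_ge0 ?Gz_ge0 // subr_ge0 hge1 //; lia.
Qed.

Lemma D_mono v u : (v <= u)%N -> (u <= E)%N -> Dv v <= Dv u.
Proof.
move=> vu uE; rewrite !D_eq //; last by lia.
apply: (@le_trans _ _ (\sum_(0 <= i < v.+1) (h i - 1) * Gz n (u - i)%N)).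
  apply: ler_sum_nat => i /andP [_ hi].
  apply: ler_wpM2l; first by rewrite subr_ge0 hge1 //; lia.
  by apply: Gz_mono; lia.
rewrite [X in _ <= X](big_cat_nat _ (n := v.+1)) //=.
rewrite lerDl big_seq_cond; apply: sumr_ge0 => i /andP [+ _]; rewrite mem_index_iota => /andP [hi1 hi2].
rewrite mulr_ge0 ?Gz_ge0 // subr_ge0 hge1 //; lia.
Qed.

Lemma D_key x y : (y <= x)%N -> (x <= E)%N -> 0 <= Dv x + (-1) ^+ n * Dv y.
Proof.
move=> yx xE; rewrite -signr_odd; case: (odd n) => /=.
  by rewrite expr1 mulN1r subr_ge0 D_mono.
by rewrite expr0 mul1r addr_ge0 ?D_ge0 //; lia.
Qed.

End Comb.

Lemma sum_ed d : all (fun c => 0 < c)%N d -> (\sum_(c <- d) c = ed d + size d)%N.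
Proof.
elim: d => [|c d IH] /=; first by rewrite /ed !big_nil.
move=> /andP [c0 hd]; rewrite big_cons ed_cons IH //; lia.
Qed.

Lemma c1_E n d : all (fun c => 0 < c)%N d -> c1_CI n d = n%:Z + 1 - (ed d)%:Z.
Proof. by move=> hd; rewrite /c1_CI sum_ed //; lia. Qed.

Lemma c1r_E n d : c1r n d = (c1_CI n d)%:~R.
Proof. by rewrite /c1r /c1_CI rmorphB /= -!pmulrn. Qed.

Lemma chi_formula n d (a : int) s : all (fun c => 1 < c)%N d ->
  s * (c1_CI n d)%:~R = a%:~R ->
  chiK n d s = Hf n (fun i => (hpoly d)`_i) (ed d) (- a)
     + (-1) ^+ n * Hf n (fun i => (hpoly d)`_i) (ed d) (a - c1_CI n d).
Proof.
move=> hall hs.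
have hd1 : all (fun c => 0 < c)%N d by apply: sub_all hall => c /ltnW.
have hd0 : all (fun c => c != 0)%N d by apply: sub_all hd1 => c; rewrite lt0n.
rewrite chiK_sum // c1r_E hs (c1_E n hd1) -sum_split; last by move=> i hi; apply: h_sym.
rewrite -(big_mkord xpredT (fun i : nat => (hpoly d)`_i * gbinom (- a%:~R - i%:R + n%:R) n)).
have [hsz _] := hpal hd1.
rewrite [RHS](big_cat_nat _ (n := size (hpoly d))) //=.
rewrite [X in _ = _ + X]big1_seq ?addr0; last first.
  by move=> i /andP [_]; rewrite mem_index_iota => /andP [hi _]; rewrite nth_default // mul0r.
apply: eq_bigr => i _; congr (_ * _); rewrite /Gz; congr gbinom.
by rewrite rmorphB /= rmorphN /= -pmulrn; ring.
Qed.

Unset Implicit Arguments.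

Theorem theorem1p2 (n : nat) (d : seq nat) (N k : nat) :
  (1 <= size d)%N ->
  all (fun di => 1 < di)%N d ->
  (0 < N)%N ->
  (N%:Z %| c1_CI n d)%Z ->
  (k <= N)%N ->
  let c1 : rat := (c1_CI n d)%:~R in
  let s : rat := k%:R / N%:R in
  let chi := chiK n d s in
  (0 < c1_CI n d ->
     (k = 0%N -> chi = 1) /\
     ((0 < k < N)%N -> chi = 0) /\
     (k = N -> chi = (-1) ^+ n)) /\
  (c1_CI n d = 0 -> chi = 1 + (-1) ^+ n) /\
  (c1_CI n d < 0 ->
     (0 <= s <= 1/2 ->
        (-1) ^+ n * chi >=
          gbinom (n.+1%:R - (N%:R - k%:R) / N%:R * c1) n.+1
          + (-1) ^+ n * gbinom (n.+1%:R - s * c1) n.+1) /\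
     (s = 1/2 -> odd n -> chi = 0) /\
     (1/2 <= s <= 1 ->
        chi >=
          gbinom (n.+1%:R - s * c1) n.+1
          + (-1) ^+ n * gbinom (n.+1%:R - (N%:R - k%:R) / N%:R * c1) n.+1)).
Proof.
move=> hsize hall hN hdiv hk c1 s chi.
have hd1 : all (fun c => 0 < c)%N d by apply: sub_all hall => c /ltnW.
case/dvdzP: hdiv => q hq.
set E := ed d.
pose hh := fun i => (hpoly d)`_i.
have hsym : forall i, (i <= E)%N -> hh i = hh (E - i)%N by move=> i hi; apply: h_sym.
have hge1 : forall i, (i <= E)%N -> 1 <= hh i by move=> i hi; apply: (proj2 (h_ge hd1 i)).
have h0 : hh 0%N = 1 by apply: h_0.
have hE := c1_E n hd1; rewrite -/E in hE.
set C := c1_CI n d in hq hE *.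
set a : int := k%:Z * q.
have hN0 : (N%:R : rat) != 0 by rewrite pnatr_eq0 -lt0n.
have hs : s * C%:~R = a%:~R.
  by rewrite /s /a hq !intrM -!pmulrn; field.
have hchi : chi = Hf n hh E (- a) + (-1) ^+ n * Hf n hh E (a - C) by apply: chi_formula.
have HfN : forall t, t < 0 -> Hf n hh E t = 0 by move=> t ht; apply: Hf_neg.
have Hf0' : Hf n hh E 0 = 1 by apply: Hf0.
split.
  move=> Cpos.
  have qpos : 0 < q by nia.
  split; first by move=> k0; rewrite hchi /a k0 mul0r oppr0 Hf0' HfN ?mulr0 ?addr0 //; lia.
  split; first by move=> hkN; rewrite hchi !HfN ?mulr0 ?addr0 //; nia.
  by move=> kN; rewrite hchi /a kN mulrC -hq subrr Hf0' HfN ?mulr1 ?add0r //; lia.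
split.
  move=> C0.
  have q0 : q = 0 by nia.
  by rewrite hchi /a q0 mulr0 oppr0 C0 subrr Hf0' mulr1.
move=> Cneg.
have qneg : q < 0 by nia.
have hv : exists vn : nat, vn%:Z = - a /\ (vn <= E)%N.
  exists `|- a|%N; split; first by rewrite gez0_abs //; nia.
  nia.
have hu : exists un : nat, un%:Z = a - C /\ (un <= E)%N.
  exists `|a - C|%N; split; first by rewrite gez0_abs //; nia.
  nia.
case: hv => vn [hv hvE]; case: hu => un [hu huE].
have hchi' : chi = Hf n hh E vn + (-1) ^+ n * Hf n hh E un by rewrite hchi hv hu.
have g1 : n.+1%:R - (N%:R - k%:R) / N%:R * c1 = n.+1%:R + un%:R.
  rewrite [un%:R]pmulrn hu rmorphB /= -hs /c1 /s; field.
  by rewrite hN0.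
have g2 : n.+1%:R - s * c1 = n.+1%:R + vn%:R.
  by rewrite /c1 hs [vn%:R]pmulrn hv rmorphN /=; ring.
have sq : (-1) ^+ n * (-1) ^+ n = 1 :> rat by rewrite -exprMn mulN1r opprK expr1n.
rewrite g1 g2.
have hkey := D_key n hge1.
split.
  move=> /andP [_ hs12].
  have k2 : (k * 2 <= N)%N.
    rewrite -(ler_nat rat) natrM; move: hs12; rewrite /s ler_pdivrMr ?ltr0n //; lra.
  have vu : (vn <= un)%N by nia.
  have := hkey un vn vu huE; rewrite /Dv hchi' => H.
  rewrite -subr_ge0.
  have -> : (-1) ^+ n * (Hf n hh E vn + (-1) ^+ n * Hf n hh E un) -
      (gbinom (n.+1%:R + un%:R) n.+1 + (-1) ^+ n * gbinom (n.+1%:R + vn%:R) n.+1) =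
      (Hf n hh E un - gbinom (n.+1%:R + un%:R) n.+1 +
       (-1) ^+ n * (Hf n hh E vn - gbinom (n.+1%:R + vn%:R) n.+1)) +
      ((-1) ^+ n * (-1) ^+ n - 1) * Hf n hh E un by ring.
  by rewrite sq subrr mul0r addr0.
split.
  move=> s12 hodd.
  have k2 : (k * 2 = N)%N.
    apply/eqP; rewrite -(eqr_nat rat) natrM; move: s12; rewrite /s => /eqP.
    by rewrite eqr_div ?pnatr_eq0 -?lt0n // => /eqP H; apply/eqP; lra.
  have vu : vn = un by nia.
  rewrite hchi' vu -signr_odd hodd expr1 mulN1r subrr //.
move=> /andP [hs12 _].
have k2 : (N <= k * 2)%N.
  rewrite -(ler_nat rat) natrM; move: hs12; rewrite /s ler_pdivlMr ?ltr0n //; lra.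
have uv : (un <= vn)%N by nia.
have := hkey vn un uv hvE; rewrite /Dv hchi' => H.
rewrite -subr_ge0.
have -> : Hf n hh E vn + (-1) ^+ n * Hf n hh E un -
    (gbinom (n.+1%:R + vn%:R) n.+1 + (-1) ^+ n * gbinom (n.+1%:R + un%:R) n.+1) =
    Hf n hh E vn - gbinom (n.+1%:R + vn%:R) n.+1 +
     (-1) ^+ n * (Hf n hh E un - gbinom (n.+1%:R + un%:R) n.+1) by ring.
exact: H.
Qed.
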